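(* Let $\Sigma$ be an alphabet and $(\mathcal{O},d)$ a pseudometric space. Then: (1) the mapping $T\mapsto V(T)$ extends to a functor $V:\mathbf{TS}_{\Sigma}\mathcal{O}\to\mathbf{Tr}_{\Sigma}\mathcal{O}$ which is a coreflection; (2) for every transition system with observations $X$, the morphism $\mathrm{unf}_X:V(X)\to X$ sending a run to its last state is a $0$-bounded $\mathbf{Lin}_{\Sigma}\mathcal{O}$-open morphism; (3) for every $\epsilon\ge0$, there is an $\epsilon$-approximate bisimulation between $T$ and $T'$ if and only if there is an $\epsilon$-approximate bisimulation between $V(T)$ and $V(T')$.
   Context: A transition system over $\Sigma$ is $(S,i,\Delta)$ with $i\in S$, $\Delta\subseteq S\times\Sigma\times S$; morphisms are functions on states preserving the initial state and transitions. A run of $(S,i,\Delta)$ is a sequence $i=q_0\xrightarrow{a_1}q_1\cdots\xrightarrow{a_n}q_n$ with $(q_{j-1},a_j,q_j)\in\Delta$. A synchronization tree is a transition system in which every state is the end of exactly one run (from the initial state). A transition system with observations is $(S,i,\Delta,\omega)$ with $\omega:S\to\mathcal{O}$; an $\epsilon$-bounded morphism is a transition system morphism $f$ with $d(\omega(s),\omega'(f(s)))\le\epsilon$ for all $s$, and a bounded morphism is one that is $\epsilon$-bounded for some $\epsilon\ge0$; these form the category $\mathbf{TS}_{\Sigma}\mathcal{O}$. $\mathbf{Tr}_{\Sigma}\mathcal{O}$ is its full subcategory of systems whose underlying transition system is a synchronization tree, and $\mathbf{Lin}_{\Sigma}\mathcal{O}$ its full subcategory of systems whose underlying transition system is a finite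 linear system $L(a_1\cdots a_n)$ (states $0,\dots,n$, initial $0$, transitions $(j-1,a_j,j)$). For $T=(S,i,\Delta,\omega)$, $V(T)$ has as states the runs of $T$, initial state the one-element run $i$, transitions $(\pi,a,\pi\xrightarrow{a}q)$ for each run $\pi$ ending in $q_n$ and each $(q_n,a,q)\in\Delta$, and observation $\omega(q_0\xrightarrow{a_1}\cdots\xrightarrow{a_n}q_n)=\omega(q_n)$. A functor is a coreflection if it is a right adjoint whose left adjoint is fully faithful (equivalently, a right adjoint whose adjunction unit is an isomorphism). A morphism $f:X\to Y$ is $\mathcal{P}$-open if for every $e:P\to P'$ in $\mathcal{P}$ and $p:P\to X$, $q':P'\to Y$ with $f\circ p=q'\circ e$ there is $q:P'\to X$ with $q\circ e=p$, $f\circ q=q'$. An $\epsilon$-approximate bisimulation between $(S,i,\Delta,\omega)$ and $(S',i',\Delta',\omega')$ is a strong bisimulation $R$ between the underlying transition systems (containing $(i,i')$ and satisfying the usual back-and-forth transfer conditions) with $d(\omega(s),\omega'(s'))\le\epsilon$ for all $(s,s')\in R$. *)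

(* Defs.v *)
From Stdlib Require Import Reals List.
Import ListNotations.
Open Scope R_scope.

Definition is_pseudometric {O : Type} (d : O -> O -> R) : Prop :=
  (forall x, d x x = 0) /\ (forall x y, d x y = d y x) /\
  (forall x y z, d x z <= d x y + d y z).

Record TSO (Sig O : Type) : Type := mkTSO {
  st : Type;
  init : st;
  trans : st -> Sig -> st -> Prop;
  obs : st -> O }.
Arguments st {Sig O} _.
Arguments init {Sig O} _.
Arguments trans {Sig O} _ _ _ _.
Arguments obs {Sig O} _ _.
Arguments mkTSO {Sig O} _ _ _ _.

Section TS.
Context {Sig O : Type} (d : O -> O -> R).

Definition is_tsmor (X Y : TSO Sig O) (f : st X -> st Y) : Prop :=
  f (init X) = init Y /\
  (forall s a s', trans X s a s' -> trans Y (f s) a (f s')).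

Definition is_eps_mor (eps : R) (X Y : TSO Sig O) (f : st X -> st Y) : Prop :=
  is_tsmor X Y f /\ forall s, d (obs X s) (obs Y (f s)) <= eps.

Definition is_bmor (X Y : TSO Sig O) (f : st X -> st Y) : Prop :=
  exists eps, 0 <= eps /\ is_eps_mor eps X Y f.

Definition Hom (X Y : TSO Sig O) : Type := { f : st X -> st Y | is_bmor X Y f }.

(* Runs. A run  q0 -a1-> q1 ... -an-> qn  from q0 is encoded by the list
   [(a1,q1); ...; (an,qn)]. *)
Fixpoint valid (X : TSO Sig O) (q : st X) (l : list (Sig * st X)) : Prop :=
  match l with
  | [] => True
  | (a, q') :: l' => trans X q a q' /\ valid X q' l'
  end.

Fixpoint last_st (X : TSO Sig O) (q : st X) (l : list (Sig * st X)) : st X :=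
  match l with
  | [] => q
  | (_, q') :: l' => last_st X q' l'
  end.

Definition run_to (X : TSO Sig O) (s : st X) (l : list (Sig * st X)) : Prop :=
  valid X (init X) l /\ last_st X (init X) l = s.

Definition is_tree (X : TSO Sig O) : Prop :=
  forall s, exists l, run_to X s l /\ forall l', run_to X s l' -> l' = l.

Definition Run (X : TSO Sig O) : Type :=
  { l : list (Sig * st X) | valid X (init X) l }.

Definition run_nil (X : TSO Sig O) : Run X := exist _ [] I.

Definition unf (X : TSO Sig O) (r : Run X) : st X :=
  last_st X (init X) (proj1_sig r).

Definition V (X : TSO Sig O) : TSO Sig O :=
  mkTSO (Run X) (run_nil X)
    (fun r a r' => exists q, trans X (unf X r) a q /\
                        proj1_sig r' = proj1_sig r ++ [(a, q)])
    (fun r => obs X (unf X r)).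

Definition LinSt (w : list Sig) : Type := { j : nat | Nat.leb j (length w) = true }.

Definition Lin (w : list Sig) (om : LinSt w -> O) : TSO Sig O :=
  mkTSO (LinSt w) (exist _ 0%nat eq_refl)
    (fun j a k => proj1_sig k = S (proj1_sig j) /\ nth_error w (proj1_sig j) = Some a)
    om.

(* Lin_Sig O - open morphisms (P-open with P the full subcategory of linear systems) *)
Definition is_Lin_open (X Y : TSO Sig O) (f : st X -> st Y) : Prop :=
  forall (w : list Sig) (om : LinSt w -> O) (w' : list Sig) (om' : LinSt w' -> O)
    (e : Hom (Lin w om) (Lin w' om')) (p : Hom (Lin w om) X) (q' : Hom (Lin w' om') Y),
    (forall s, f (proj1_sig p s) = proj1_sig q' (proj1_sig e s)) ->
    exists q : Hom (Lin w' om') X,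
      (forall s, proj1_sig q (proj1_sig e s) = proj1_sig p s) /\
      (forall s, f (proj1_sig q s) = proj1_sig q' s).

Definition is_approx_bisim (eps : R) (X Y : TSO Sig O) (Rl : st X -> st Y -> Prop) : Prop :=
  Rl (init X) (init Y) /\
  (forall s s' a t, Rl s s' -> trans X s a t -> exists t', trans Y s' a t' /\ Rl t t') /\
  (forall s s' a t', Rl s s' -> trans Y s' a t' -> exists t, trans X s a t /\ Rl t t') /\
  (forall s s', Rl s s' -> d (obs X s) (obs Y s') <= eps).

(* V extends to a functor TS -> Tr which is a coreflection, i.e. right adjoint
   to the (fully faithful) inclusion Tr -> TS, with counit unf and invertible unit. *)
Definition V_coreflection : Prop :=
  (forall X : TSO Sig O, is_tree (V X)) /\
  exists Vmor : forall X Y : TSO Sig O, Hom X Y -> Hom (V X) (V Y),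
    (forall (X : TSO Sig O) (f : Hom X X), (forall s, proj1_sig f s = s) ->
       forall r, proj1_sig (Vmor X X f) r = r) /\
    (forall (X Y Z : TSO Sig O) (f : Hom X Y) (g : Hom Y Z) (h : Hom X Z),
       (forall s, proj1_sig h s = proj1_sig g (proj1_sig f s)) ->
       forall r, proj1_sig (Vmor X Z h) r = proj1_sig (Vmor Y Z g) (proj1_sig (Vmor X Y f) r)) /\
    (forall X : TSO Sig O, is_bmor (V X) X (unf X)) /\
    (forall (X Y : TSO Sig O) (f : Hom X Y) r,
       unf Y (proj1_sig (Vmor X Y f) r) = proj1_sig f (unf X r)) /\
    (* universal property of the counit (adjunction Incl -| V) *)
    (forall (T X : TSO Sig O), is_tree T -> forall g : Hom T X,
       exists h : Hom T (V X),
         (forall t, unf X (proj1_sig h t) = proj1_sig g t) /\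
         (forall h' : Hom T (V X), (forall t, unf X (proj1_sig h' t) = proj1_sig g t) ->
            forall t, proj1_sig h' t = proj1_sig h t)) /\
    (forall T : TSO Sig O, is_tree T ->
       exists eta : Hom T (V T),
         (forall t, unf T (proj1_sig eta t) = t) /\
         (forall r, proj1_sig eta (unf T r) = r)).

End TS.

(* Main.v *)
Require Import Defs.
From Stdlib Require Import Reals List ProofIrrelevance ClassicalEpsilon Lia Lra PeanoNat.
Import ListNotations.
Open Scope R_scope.

Lemma sig_eq {A : Type} {P : A -> Prop} (x y : sig P) :
  proj1_sig x = proj1_sig y -> x = y.
Proof. destruct x, y; simpl; intro; subst; f_equal; apply proof_irrelevance. Qed.

Section H.
Context {Sig O : Type}.

Lemma valid_app (X : TSO Sig O) q l1 l2 :
  valid X q (l1 ++ l2) <-> valid X q l1 /\ valid X (last_st X q l1) l2.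
Proof.
  revert q; induction l1 as [|[a q'] l1 IH]; intro q; simpl.
  - tauto.
  - rewrite IH; tauto.
Qed.

Lemma last_app (X : TSO Sig O) q l1 l2 :
  last_st X q (l1 ++ l2) = last_st X (last_st X q l1) l2.
Proof.
  revert q; induction l1 as [|[a q'] l1 IH]; intro q; simpl; auto.
Qed.

Lemma valid_snoc (X : TSO Sig O) q l a q' :
  valid X q (l ++ [(a,q')]) <-> valid X q l /\ trans X (last_st X q l) a q'.
Proof. rewrite valid_app; simpl; tauto. Qed.

Lemma last_snoc (X : TSO Sig O) q l a q' :
  last_st X q (l ++ [(a,q')]) = q'.
Proof. rewrite last_app; reflexivity. Qed.

Definition mapg {X Y : TSO Sig O} (g : st X -> st Y) (l : list (Sig * st X)) :=
  map (fun p => (fst p, g (snd p))) l.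

Lemma valid_mapg (X Y : TSO Sig O) (g : st X -> st Y) :
  (forall s a s', trans X s a s' -> trans Y (g s) a (g s')) ->
  forall l q, valid X q l -> valid Y (g q) (mapg g l).
Proof.
  intros Hg; induction l as [|[a q'] l IH]; intros q; simpl; auto.
  intros [H1 H2]; split; auto.
Qed.

Lemma last_mapg (X Y : TSO Sig O) (g : st X -> st Y) l q :
  last_st Y (g q) (mapg g l) = g (last_st X q l).
Proof.
  revert q; induction l as [|[a q'] l IH]; intros q; simpl; auto.
Qed.

Lemma mapg_snoc (X Y : TSO Sig O) (g : st X -> st Y) l a q :
  mapg g (l ++ [(a,q)]) = mapg g l ++ [(a, g q)].
Proof. unfold mapg; rewrite map_app; reflexivity. Qed.

Definition Rv {T T' : TSO Sig O} (Rl : st T -> st T' -> Prop) (r : Run T) (r' : Run T') :=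
  Forall2 (fun p p' => fst p = fst p' /\ Rl (snd p) (snd p')) (proj1_sig r) (proj1_sig r').

Lemma last_rel {T T' : TSO Sig O} (Rl : st T -> st T' -> Prop) l l' q q' :
  Forall2 (fun p p' => fst p = fst p' /\ Rl (snd p) (snd p')) l l' ->
  Rl q q' -> Rl (last_st T q l) (last_st T' q' l').
Proof.
  intros H; revert q q'; induction H as [|[a x] [b y] l l' [_ Hxy] _ IH]; intros q q' Hq;
   simpl; auto.
Qed.

Lemma snoc_run (X : TSO Sig O) (r : Run X) a q :
  trans X (unf X r) a q -> valid X (init X) (proj1_sig r ++ [(a,q)]).
Proof. intro H; apply valid_snoc; split; [exact (proj2_sig r) | exact H]. Qed.

Lemma bisim_iff (d : O -> O -> R) eps (T T' : TSO Sig O) :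
     (exists Rl, is_approx_bisim d eps T T' Rl) <->
     (exists Rl, is_approx_bisim d eps (V T) (V T') Rl).
Proof.
  split.
  - intros [Rl [Hi [Hf [Hb Ho]]]].
    exists (Rv Rl).
    assert (Hu : forall r r', Rv Rl r r' -> Rl (unf T r) (unf T' r')).
    { intros r r' H; unfold unf; apply last_rel; auto. }
    split; [constructor|split; [|split]].
    + intros r r' a t Hr [q [Hq Ht]].
      destruct (Hf _ _ _ _ (Hu _ _ Hr) Hq) as [q' [Hq' Hqq]].
      exists (exist _ _ (snoc_run T' r' a q' Hq')); split.
      * exists q'; split; auto.
      * unfold Rv; simpl; rewrite Ht; apply Forall2_app; auto.
    + intros r r' a t' Hr [q' [Hq' Ht]].
      destruct (Hb _ _ _ _ (Hu _ _ Hr) Hq') as [q [Hq Hqq]].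
      exists (exist _ _ (snoc_run T r a q Hq)); split.
      * exists q; split; auto.
      * unfold Rv; simpl; rewrite Ht; apply Forall2_app; auto.
    + intros r r' Hr; simpl; apply Ho, Hu, Hr.
  - intros [Rl [Hi [Hf [Hb Ho]]]].
    exists (fun s s' => exists r r', Rl r r' /\ unf T r = s /\ unf T' r' = s').
    split; [exists (run_nil T), (run_nil T'); auto|split; [|split]].
    + intros s s' a t [r [r' [Hr [<- <-]]]] Ht.
      set (r2 := exist _ _ (snoc_run T r a t Ht) : Run T).
      assert (Htr : trans (V T) r a r2) by (exists t; split; auto).
      destruct (Hf _ _ _ _ Hr Htr) as [r2' [[t' [Ht' E]] H2]].
      exists t'; split; auto.
      exists r2, r2'; split; auto; split.
      * unfold unf, r2; simpl; apply last_snoc.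
      * unfold unf; rewrite E; apply last_snoc.
    + intros s s' a t' [r [r' [Hr [<- <-]]]] Ht'.
      set (r2' := exist _ _ (snoc_run T' r' a t' Ht') : Run T').
      assert (Htr : trans (V T') r' a r2') by (exists t'; split; auto).
      destruct (Hb _ _ _ _ Hr Htr) as [r2 [[t [Ht E]] H2]].
      exists t; split; auto.
      exists r2, r2'; split; auto; split.
      * unfold unf; rewrite E; apply last_snoc.
      * unfold unf, r2'; simpl; apply last_snoc.
    + intros s s' [r [r' [Hr [<- <-]]]]; apply (Ho _ _ Hr).
Qed.

Lemma unf_mor (X : TSO Sig O) : is_tsmor (V X) X (unf X).
Proof.
  split; [reflexivity|].
  intros r a r' [q [Hq E]]; unfold unf at 2; rewrite E, last_snoc; exact Hq.
Qed.

End H.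

Section H.
Context {Sig O : Type} (d : O -> O -> R).

Lemma hom_tsmor {X Y : TSO Sig O} (f : Hom d X Y) : is_tsmor X Y (proj1_sig f).
Proof. destruct (proj2_sig f) as [e [_ [H _]]]; exact H. Qed.

Lemma VX_len (X : TSO Sig O) L q :
  valid (V X) q L -> length (proj1_sig (last_st (V X) q L)) = (length (proj1_sig q) + length L)%nat.
Proof.
  revert q; induction L as [|[a r] L IH]; intros q; simpl.
  - intros; lia.
  - intros [[q0 [_ E]] HL]. rewrite IH by auto. rewrite E, length_app; simpl; lia.
Qed.

Lemma VX_uniq (X : TSO Sig O) L1 : forall L2,
  valid (V X) (run_nil X) L1 -> valid (V X) (run_nil X) L2 ->
  last_st (V X) (run_nil X) L1 = last_st (V X) (run_nil X) L2 -> L1 = L2.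
Proof.
  induction L1 as [|[a r1] L1 IH] using rev_ind; intros L2 H1 H2 E.
  - destruct L2 as [|[b r2] L2 _] using rev_ind; auto.
    exfalso. apply (f_equal (fun r => length (proj1_sig r))) in E.
    rewrite (VX_len X _ _ H2) in E. rewrite length_app in E; simpl in E; lia.
  - destruct L2 as [|[b r2] L2 _] using rev_ind.
    + exfalso. apply (f_equal (fun r => length (proj1_sig r))) in E.
      rewrite (VX_len X _ _ H1) in E. rewrite length_app in E; simpl in E; lia.
    + rewrite !last_snoc in E. subst r2.
      apply valid_snoc in H1, H2. destruct H1 as [H1 [q1 [_ E1]]], H2 as [H2 [q2 [_ E2]]].
      rewrite E1 in E2. apply app_inj_tail in E2. destruct E2 as [E2 E3].
      injection E3; intros; subst b.
      rewrite (IH L2); auto. apply sig_eq; auto.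
Qed.

Lemma VX_exists (X : TSO Sig O) l : forall (Hl : valid X (init X) l),
  exists L, run_to (V X) (exist _ l Hl) L.
Proof.
  induction l as [|[a q] l IH] using rev_ind; intros Hl.
  - exists []; split; [exact I| apply sig_eq; reflexivity].
  - pose proof Hl as Hl'. apply valid_snoc in Hl'. destruct Hl' as [H0 Ht].
    destruct (IH H0) as [L [HL EL]].
    exists (L ++ [(a, exist _ _ Hl)]). split.
    + apply valid_snoc; split; auto. rewrite EL. exists q; split; auto.
    + apply last_snoc.
Qed.

Lemma VX_tree (X : TSO Sig O) : is_tree (V X).
Proof.
  intros [l Hl]. destruct (VX_exists X l Hl) as [L [HL EL]].
  exists L; split; [split; auto|]. intros L' [HL' EL']. apply VX_uniq; auto. simpl in EL, EL'. rewrite EL, EL'; reflexivity.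
Qed.

Lemma Vfun_valid {X Y : TSO Sig O} (f : Hom d X Y) (r : Run X) :
  valid Y (init Y) (mapg (proj1_sig f) (proj1_sig r)).
Proof.
  destruct (hom_tsmor f) as [Hi Ht]. rewrite <- Hi.
  apply valid_mapg; auto. exact (proj2_sig r).
Qed.

Definition Vfun {X Y : TSO Sig O} (f : Hom d X Y) (r : Run X) : Run Y :=
  exist _ _ (Vfun_valid f r).

Lemma Vfun_unf {X Y : TSO Sig O} (f : Hom d X Y) r :
  unf Y (Vfun f r) = proj1_sig f (unf X r).
Proof.
  unfold unf, Vfun; simpl. destruct (hom_tsmor f) as [Hi Ht]. rewrite <- Hi.
  apply last_mapg.
Qed.

Lemma Vfun_bmor {X Y : TSO Sig O} (f : Hom d X Y) : is_bmor d (V X) (V Y) (Vfun f).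
Proof.
  destruct (proj2_sig f) as [e [He [[Hi Ht] Ho]]].
  exists e; split; auto; split; [split|].
  - apply sig_eq; reflexivity.
  - intros r a r' [q [Hq E]]. exists (proj1_sig f q); split.
    + rewrite Vfun_unf; auto.
    + simpl. rewrite E. apply mapg_snoc.
  - intros r; simpl. rewrite Vfun_unf. apply Ho.
Qed.

Definition Vmor (X Y : TSO Sig O) (f : Hom d X Y) : Hom d (V X) (V Y) :=
  exist _ (Vfun f) (Vfun_bmor f).

End H.

Section H.
Context {Sig O : Type} (d : O -> O -> R).

Lemma mapg_ext {X Y : TSO Sig O} (f g : st X -> st Y) l :
  (forall s, f s = g s) -> mapg f l = mapg g l.
Proof. intro H; unfold mapg; apply map_ext; intros [a s]; simpl; rewrite H; auto. Qed.

Lemma mapg_id {X : TSO Sig O} (f : st X -> st X) l :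
  (forall s, f s = s) -> mapg f l = l.
Proof. intro H; induction l as [|[a s] l IH]; simpl; auto. rewrite H; f_equal; auto. Qed.

Lemma mapg_comp {X Y Z : TSO Sig O} (f : st X -> st Y) (g : st Y -> st Z) l :
  mapg g (mapg f l) = mapg (fun s => g (f s)) l.
Proof. unfold mapg; rewrite map_map; reflexivity. Qed.

Lemma into_V (Y X : TSO Sig O) (h : st Y -> Run X) : is_tsmor Y (V X) h ->
  forall l, valid Y (init Y) l ->
  proj1_sig (h (last_st Y (init Y) l)) = mapg (fun y => unf X (h y)) l.
Proof.
  intros [Hi Ht]. induction l as [|[a q] l IH] using rev_ind; intros Hl.
  - simpl. rewrite Hi; reflexivity.
  - apply valid_snoc in Hl. destruct Hl as [Hl Htr].
    destruct (Ht _ _ _ Htr) as [q0 [Hq0 E]].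
    rewrite last_snoc, E, IH by auto. rewrite mapg_snoc. do 3 f_equal.
    apply (f_equal (fun l => last_st X (init X) l)) in E. rewrite last_snoc in E.
    symmetry; exact E.
Qed.

Lemma tree_lift (T X : TSO Sig O) (g : Hom d T X) (p : st T -> list (Sig * st T))
  (Hp : forall t, run_to T t (p t)) (Hu : forall t l, run_to T t l -> l = p t) :
  exists h : Hom d T (V X),
    (forall t, unf X (proj1_sig h t) = proj1_sig g t) /\
    (forall h' : Hom d T (V X), (forall t, unf X (proj1_sig h' t) = proj1_sig g t) ->
        forall t, proj1_sig h' t = proj1_sig h t) /\
    (forall t, proj1_sig (proj1_sig h t) = mapg (proj1_sig g) (p t)).
Proof.
  destruct (proj2_sig g) as [e [He [[Hi Ht] Ho]]].
  assert (Hv : forall t, valid X (init X) (mapg (proj1_sig g) (p t))).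
  { intro t; rewrite <- Hi; apply valid_mapg; auto. apply Hp. }
  assert (Hl : forall t, last_st X (init X) (mapg (proj1_sig g) (p t)) = proj1_sig g t).
  { intro t; rewrite <- Hi, last_mapg. f_equal. apply Hp. }
  set (hf := fun t => exist _ _ (Hv t) : Run X).
  assert (Hm : is_bmor d T (V X) hf).
  { exists e; split; auto; split; [split|].
    - apply sig_eq; simpl. rewrite <- (Hu (init T) []); [reflexivity|].
      split; [exact I|reflexivity].
    - intros s a s' Hss. exists (proj1_sig g s'). split.
      + unfold unf, hf; simpl. rewrite Hl. auto.
      + simpl. rewrite <- mapg_snoc. f_equal. symmetry; apply Hu.
        destruct (Hp s) as [H1 H2]. split.
        * apply valid_snoc; split; auto. rewrite H2; auto.
        * apply last_snoc.
    - intro s; simpl. unfold unf, hf; simpl. rewrite Hl. apply Ho. }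
  exists (exist _ hf Hm). split; [|split].
  - intro t; simpl. unfold unf, hf; simpl. apply Hl.
  - intros h' Hh' t. simpl. apply sig_eq. unfold hf; simpl.
    destruct (Hp t) as [H1 H2].
    rewrite <- H2 at 1. rewrite into_V; auto.
    + apply mapg_ext. auto.
    + apply hom_tsmor.
  - intro t; reflexivity.
Qed.

Lemma id_bmor (Hd : is_pseudometric d) (T : TSO Sig O) : is_bmor d T T (fun t => t).
Proof.
  exists 0; split; [lra|]. split; [split; auto|]. intros s. destruct Hd as [H0 _]. rewrite H0; lra.
Qed.

Lemma coreflection (Hd : is_pseudometric d) : @V_coreflection Sig O d.
Proof.
  split; [intro X; apply VX_tree|].
  exists (Vmor d). split; [|split; [|split; [|split; [|split]]]].
  - intros X f Hf r. apply sig_eq; simpl. apply mapg_id; auto.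
  - intros X Y Z f g h Hh r. apply sig_eq; simpl. rewrite mapg_comp. apply mapg_ext; auto.
  - intro X. exists 0; split; [lra|]. split; [apply unf_mor|].
    intro s; destruct Hd as [H0 _]; simpl; rewrite H0; lra.
  - intros X Y f r. simpl. apply Vfun_unf.
  - intros T X Htr g.
    set (p := fun t => proj1_sig (constructive_indefinite_description _ (Htr t))).
    assert (Hp : forall t, run_to T t (p t) /\ forall l, run_to T t l -> l = p t).
    { intro t; unfold p; destruct (constructive_indefinite_description _ (Htr t)) as [l Hl];
      exact Hl. }
    destruct (tree_lift T X g p (fun t => proj1 (Hp t)) (fun t => proj2 (Hp t)))
      as [h [H1 [H2 _]]].
    exists h; split; auto.
  - intros T Htr.
    set (p := fun t => proj1_sig (constructive_indefinite_description _ (Htr t))).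
    assert (Hp : forall t, run_to T t (p t) /\ forall l, run_to T t l -> l = p t).
    { intro t; unfold p; destruct (constructive_indefinite_description _ (Htr t)) as [l Hl];
      exact Hl. }
    destruct (tree_lift T T (exist _ _ (id_bmor Hd T)) p (fun t => proj1 (Hp t))
       (fun t => proj2 (Hp t))) as [h [H1 [H2 H3]]].
    exists h; split; auto.
    intro r. apply sig_eq. rewrite H3. simpl. rewrite mapg_id by auto.
    symmetry; apply Hp. split; [exact (proj2_sig r)|reflexivity].
Qed.

End H.

Section H.
Context {Sig O : Type} (d : O -> O -> R).

Definition clamp (w : list Sig) (k : nat) : LinSt w :=
  match Nat.leb k (length w) as b return (Nat.leb k (length w) = b -> LinSt w) with
  | true => fun H => exist _ k H
  | false => fun _ => exist _ 0%nat eq_refl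
  end eq_refl.

Lemma clamp_eq (w : list Sig) (s : LinSt w) : clamp w (proj1_sig s) = s.
Proof.
  apply sig_eq. destruct s as [k Hk]; simpl. unfold clamp.
  generalize (@eq_refl bool (Nat.leb k (length w))).
  generalize (Nat.leb k (length w)) at 2 3. intros b; destruct b; simpl; auto.
  intro E; rewrite Hk in E; discriminate.
Qed.

Lemma pred_ok (j n : nat) : Nat.leb (S j) n = true -> Nat.leb j n = true.
Proof. rewrite !Nat.leb_le; lia. Qed.

Lemma nth_some (w : list Sig) j : Nat.leb (S j) (length w) = true ->
  exists a, nth_error w j = Some a.
Proof.
  intro H; apply Nat.leb_le in H.
  destruct (nth_error w j) eqn:E; eauto.
  apply nth_error_None in E; lia.
Qed.

Fixpoint ql {X : TSO Sig O} (w' : list Sig) (Q : nat -> st X) (j : nat) : list (Sig * st X) :=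
  match j with
  | Datatypes.O => []
  | S k => match nth_error w' k with
           | Some a => ql w' Q k ++ [(a, Q (S k))]
           | None => ql w' Q k
           end
  end.

Lemma lin_open (X : TSO Sig O) : is_Lin_open d (V X) X (unf X).
Proof.
  intros w om w' om' e p q' Hc.
  destruct (proj2_sig e) as [ee [_ [[ei et] _]]].
  destruct (proj2_sig p) as [pe [_ [[pi pt] _]]].
  destruct (proj2_sig q') as [qe [Hqe [[qi qt] qo]]].
  (* e is the identity on indices *)
  assert (Eid : forall j Hj, proj1_sig (proj1_sig e (exist _ j Hj)) = j /\
             (forall a, S j <= length w -> nth_error w j = Some a -> nth_error w' j = Some a)%nat).
  { induction j as [|j IH]; intros Hj.
    - split.
      + replace (exist _ 0%nat Hj) with (init (Lin w om)) by (apply sig_eq; reflexivity).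
        rewrite ei; reflexivity.
      + intros a Ha Hw.
        assert (Hs : Nat.leb 1 (length w) = true) by (apply Nat.leb_le; lia).
        pose proof (et (exist _ 0%nat eq_refl) a (exist _ 1%nat Hs) (conj eq_refl Hw)) as Ht.
        destruct Ht as [_ Ht]. pose proof (f_equal (@proj1_sig _ _) ei) as E0. simpl in E0, Ht. rewrite E0 in Ht. exact Ht.
    - destruct (IH (pred_ok _ _ Hj)) as [IH1 _].
      destruct (nth_some w j Hj) as [a Ha].
      pose proof (et (exist _ j (pred_ok _ _ Hj)) a (exist _ (S j) Hj) (conj eq_refl Ha)) as Ht.
      destruct Ht as [Ht1 _]. rewrite IH1 in Ht1. split; [exact Ht1|].
      intros b Hb Hw.
      assert (Hs : Nat.leb (S (S j)) (length w) = true) by (apply Nat.leb_le; lia).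
      pose proof (et (exist _ (S j) Hj) b (exist _ (S (S j)) Hs) (conj eq_refl Hw)) as Ht.
      destruct Ht as [_ Ht]. simpl in Ht, Ht1. rewrite Ht1 in Ht. exact Ht. }
  set (Q := fun k => proj1_sig q' (clamp w' k)).
  assert (HQ : forall s, Q (proj1_sig s) = proj1_sig q' s).
  { intro s; unfold Q; rewrite clamp_eq; reflexivity. }
  assert (Hok : forall j, Nat.leb j (length w') = true ->
     valid X (init X) (ql w' Q j) /\ last_st X (init X) (ql w' Q j) = Q j).
  { induction j as [|j IH]; intros Hj.
    - split; [exact I|]. simpl. rewrite <- qi. rewrite <- (HQ (init (Lin w' om'))). reflexivity.
    - destruct (IH (pred_ok _ _ Hj)) as [IH1 IH2].
      destruct (nth_some w' j Hj) as [a Ha]. simpl. rewrite Ha.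
      split; [|apply last_snoc].
      apply valid_snoc; split; auto. rewrite IH2.
      pose proof (HQ (exist _ j (pred_ok _ _ Hj))) as E1.
      pose proof (HQ (exist _ (S j) Hj)) as E2. simpl in E1, E2.
      rewrite E1, E2. apply qt. split; auto. }
  set (qf := fun s : LinSt w' => exist _ (ql w' Q (proj1_sig s)) (proj1 (Hok _ (proj2_sig s))) : Run X).
  assert (Hunf : forall s, unf X (qf s) = proj1_sig q' s).
  { intro s. unfold unf, qf; simpl. rewrite (proj2 (Hok _ (proj2_sig s))). apply HQ. }
  assert (Hm : is_bmor d (Lin w' om') (V X) qf).
  { exists qe; split; auto; split; [split|].
    - apply sig_eq; reflexivity.
    - intros s a s' [E1 E2]. exists (proj1_sig q' s'). split.
      + rewrite Hunf. apply qt. split; auto.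
      + unfold qf; simpl. rewrite E1. simpl. rewrite E2. f_equal. f_equal. f_equal.
        rewrite <- E1. apply HQ.
    - intro s. simpl. rewrite Hunf. apply qo. }
  assert (Pp : forall j Hj, proj1_sig (proj1_sig p (exist _ j Hj)) = ql w' Q j).
  { induction j as [|j IH]; intros Hj.
    - rewrite (sig_eq (exist _ 0%nat Hj) (init (Lin w om)) eq_refl).
      rewrite pi; reflexivity.
    - destruct (nth_some w j Hj) as [a Ha].
      pose proof (pt (exist _ j (pred_ok _ _ Hj)) a (exist _ (S j) Hj) (conj eq_refl Ha)) as Ht.
      destruct Ht as [q0 [Hq0 Eq]]. rewrite Eq.
      rewrite IH.
      simpl. destruct (Eid j (pred_ok _ _ Hj)) as [_ Hw].
      rewrite (Hw a); [| exact (proj1 (Nat.leb_le _ _) Hj) | exact Ha].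
      f_equal. f_equal. f_equal.
      apply (f_equal (fun l => last_st X (init X) l)) in Eq. rewrite last_snoc in Eq.
      rewrite <- Eq. change (unf X (proj1_sig p (exist _ (S j) Hj)) = Q (S j)).
      rewrite Hc. rewrite <- (HQ (proj1_sig e _)). f_equal. apply Eid. }
  exists (exist _ qf Hm). split.
  - intros s. simpl. apply sig_eq. unfold qf; simpl.
    destruct s as [j Hj]. destruct (Eid j Hj) as [E _]. simpl in E. rewrite E.
    symmetry; apply Pp.
  - intro s. simpl. apply Hunf.
Qed.

End H.

Theorem proposition4 (Sig O : Type) (d : O -> O -> R) (Hd : is_pseudometric d) :
  @V_coreflection Sig O d /\
  (forall X : TSO Sig O,
     is_eps_mor d 0 (V X) X (unf X) /\ is_bmor d (V X) X (unf X) /\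
     is_Lin_open d (V X) X (unf X)) /\
  (forall eps : R, 0 <= eps -> forall T T' : TSO Sig O,
     (exists Rl, is_approx_bisim d eps T T' Rl) <->
     (exists Rl, is_approx_bisim d eps (V T) (V T') Rl)).
Proof.
  split; [apply coreflection; exact Hd|split].
  - intro X.
    assert (H0 : is_eps_mor d 0 (V X) X (unf X)).
    { split; [apply unf_mor|]. intro s; destruct Hd as [Hx _]; simpl; rewrite Hx; lra. }
    split; [exact H0|split; [exists 0; split; [lra|exact H0]|apply lin_open]].
  - intros eps _ T T'. apply bisim_iff.
Qed.
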